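(* Let $W\subset V$ and $M\le n$. The set $W$ is a norming set for $\mathcal{B}_M$ if and only if the spectral norm of the matrix $\mathbf{B}_M(\mathbf{I}_n-\mathbf{S}_W)\mathbf{B}_M$ is strictly less than $1$. In this case the norming constant satisfies $$\|(\mathbf{S}_W\mathbf{B}_M)^{-1}\|\le\frac{1}{1-\|\mathbf{B}_M(\mathbf{I}_n-\mathbf{S}_W)\mathbf{B}_M\|}.$$
   Context: Let $G$ be a graph with vertex set $V=\{v_1,\dots,v_n\}$, symmetric non-negative weighted adjacency matrix $\mathbf{A}$, degree matrix $\mathbf{D}=\mathrm{diag}(\sum_k\mathbf{A}_{ik})$ (positive), and normalized Laplacian $\mathbf{L}=\mathbf{I}_n-\mathbf{D}^{-1/2}\mathbf{A}\mathbf{D}^{-1/2}$. Signals are vectors in $\mathcal{L}(G)\cong\mathbb{R}^n$ with euclidean norm. Fix an orthonormal eigendecomposition $\mathbf{L}=\mathbf{U}\,\mathrm{diag}(\lambda_1,\dots,\lambda_n)\mathbf{U}^\intercal$ with columns $u_1,\dots,u_n$, and let $\mathcal{B}_M=\mathrm{span}\{u_1,\dots,u_M\}$. Define the projections $\mathbf{S}_W x(v)=x(v)$ for $v\in W$ and $0$ otherwise, and $\mathbf{B}_M x=\sum_{k=1}^M(u_k^\intercal x)u_k$. $W$ is a norming set for $\mathcal{B}_M$ if $\mathbf{S}_W\mathbf{B}_M$ is injective on $\mathcal{B}_M$; then $(\mathbf{S}_W\mathbf{B}_M)^{-1}$ denotes the inverse of $\mathbf{S}_W\mathbf{B}_M|_{\mathcal{B}_M}$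 on the image $\mathbf{S}_W(\mathcal{B}_M)$, and the norming constant is $\|(\mathbf{S}_W\mathbf{B}_M)^{-1}\|=\sup_{z\in\mathbf{S}_W(\mathcal{B}_M),\|z\|\le1}\|(\mathbf{S}_W\mathbf{B}_M)^{-1}z\|$. Matrix norms are spectral norms. *)

(* Defs.v *)
From HB Require Import structures.
From mathcomp Require Import all_boot all_order all_algebra.
From mathcomp Require Import all_classical all_reals.
Set Implicit Arguments. Unset Strict Implicit. Unset Printing Implicit Defensive.
Import Order.TTheory GRing.Theory Num.Theory.
Local Open Scope ring_scope.
Local Open Scope classical_set_scope.

Section Defs.
Variable R : realType.

Definition vnorm n (x : 'cV[R]_n) : R := Num.sqrt (\sum_i x i 0 ^+ 2).

Definition opnorm m n (A : 'M[R]_(m, n)) : R :=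
  sup [set vnorm (A *m x) | x in [set x : 'cV[R]_n | vnorm x <= 1]].

Definition degree n (A : 'M[R]_n) (i : 'I_n) : R := \sum_k A i k.

(* normalized Laplacian I - D^{-1/2} A D^{-1/2} *)
Definition normLap n (A : 'M[R]_n) : 'M[R]_n :=
  1%:M - \matrix_(i, j) (A i j / (Num.sqrt (degree A i) * Num.sqrt (degree A j))).

(* the subspace B_M = span {u_1,..,u_M} (columns of U, 0-indexed k < M) *)
Definition inBM n (U : 'M[R]_n) (M : nat) (x : 'cV[R]_n) : Prop :=
  exists c : 'I_n -> R, x = \sum_(k < n | (k < M)%N) c k *: col k U.

Definition projB n (U : 'M[R]_n) (M : nat) : 'M[R]_n :=
  \sum_(k < n | (k < M)%N) (col k U *m (col k U)^T).

Definition projS n (W : {set 'I_n}) : 'M[R]_n :=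
  \matrix_(i, j) (if (i == j) && (i \in W) then 1 else 0).

Definition norming n (U : 'M[R]_n) (M : nat) (W : {set 'I_n}) : Prop :=
  forall x y, inBM U M x -> inBM U M y ->
    projS W *m projB U M *m x = projS W *m projB U M *m y -> x = y.

(* norming constant ||(S_W B_M)^{-1}||: sup of ||(S_W B_M)^{-1} z|| over
   z = S_W B_M x in S_W(B_M) with ||z|| <= 1; reindexed by the (unique) x in B_M *)
Definition norming_const n (U : 'M[R]_n) (M : nat) (W : {set 'I_n}) : R :=
  sup [set vnorm x | x in
        [set x : 'cV[R]_n | inBM U M x /\ vnorm (projS W *m projB U M *m x) <= 1]].

End Defs.
Arguments projS {R n} W.

(* Main.v *)
Require Import Defs.
From HB Require Import structures.
From mathcomp Require Import all_boot all_order all_algebra.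
From mathcomp Require Import all_classical all_reals.
From mathcomp Require Import ring lra.
Import Order.TTheory GRing.Theory Num.Theory.
Local Open Scope ring_scope.

Definition dot {R : realType} {n} (x y : 'cV[R]_n) : R := \sum_i x i 0 * y i 0.

Lemma dotC {R : realType} {n} (x y : 'cV[R]_n) : dot x y = dot y x.
Proof. by apply: eq_bigr => i _; rewrite mulrC. Qed.

Lemma dotDl {R : realType} {n} (x y z : 'cV[R]_n) : dot (x + y) z = dot x z + dot y z.
Proof. by rewrite /dot -big_split; apply: eq_bigr => i _; rewrite !mxE mulrDl. Qed.

Lemma dotZl {R : realType} {n} (a : R) (x z : 'cV[R]_n) : dot (a *: x) z = a * dot x z.
Proof. by rewrite /dot big_distrr; apply: eq_bigr => i _; rewrite !mxE -mulrA. Qed.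

Lemma dotNl {R : realType} {n} (x z : 'cV[R]_n) : dot (- x) z = - dot x z.
Proof. by rewrite -scaleN1r dotZl mulN1r. Qed.

Lemma dotBl {R : realType} {n} (x y z : 'cV[R]_n) : dot (x - y) z = dot x z - dot y z.
Proof. by rewrite dotDl dotNl. Qed.

Lemma dotDr {R : realType} {n} (x y z : 'cV[R]_n) : dot z (x + y) = dot z x + dot z y.
Proof. by rewrite dotC dotDl !(dotC z). Qed.

Lemma dotZr {R : realType} {n} (a : R) (x z : 'cV[R]_n) : dot z (a *: x) = a * dot z x.
Proof. by rewrite dotC dotZl dotC. Qed.

Lemma dotBr {R : realType} {n} (x y z : 'cV[R]_n) : dot z (x - y) = dot z x - dot z y.
Proof. by rewrite dotC dotBl !(dotC z). Qed.

Lemma dot0l {R : realType} {n} (z : 'cV[R]_n) : dot 0 z = 0.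
Proof. by rewrite /dot big1 // => i _; rewrite mxE mul0r. Qed.

Lemma dot0r {R : realType} {n} (z : 'cV[R]_n) : dot z 0 = 0.
Proof. by rewrite dotC dot0l. Qed.

Lemma dot_mulmx {R : realType} {n} (A : 'M[R]_n) (x y : 'cV[R]_n) :
  dot x (A *m y) = dot (A^T *m x) y.
Proof.
rewrite /dot.
under eq_bigr do rewrite mxE big_distrr.
under [RHS]eq_bigr do rewrite mxE big_distrl.
rewrite exchange_big; apply: eq_bigr => i _; apply: eq_bigr => j _.
by rewrite mxE /= mulrA [x _ 0 * _]mulrC.
Qed.

Lemma dot_ge0 {R : realType} {n} (x : 'cV[R]_n) : 0 <= dot x x.
Proof. by apply: sumr_ge0 => i _; rewrite -expr2 sqr_ge0. Qed.

Lemma dot_eq0 {R : realType} {n} (x : 'cV[R]_n) : dot x x = 0 -> x = 0.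
Proof.
move=> h; apply/matrixP => i j; rewrite (ord1 j) mxE.
have := @psumr_eq0P R _ predT (fun i => x i 0 * x i 0).
move=> /(_ (fun i _ => ltac:(by rewrite -expr2 sqr_ge0)) h i isT) /eqP.
by rewrite mulf_eq0 orbb => /eqP.
Qed.


Lemma quad_disc {R : realType} (A B C : R) : 0 <= B ->
  (forall s, 0 <= A + 2 * s * C + s ^+ 2 * B) -> C ^+ 2 <= A * B.
Proof.
move=> B0 f; have [Bz|Bp] := eqVneq B 0.
  subst B; rewrite mulr0.
  have [Cz|Cn] := eqVneq C 0; first by rewrite Cz expr0n.
  have := f (- (A + 1) / (2 * C)).
  have -> : 2 * (- (A + 1) / (2 * C)) * C = - (A + 1) by field; rewrite Cn.
  lra.
have Bpos : 0 < B by rewrite lt0r Bp.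
have := f (- C / B); set s := - C / B.
have hs : s * B = - C by rewrite /s mulrVK // unitfE.
have -> : A + 2 * s * C + s ^+ 2 * B = A + s * C.
  rewrite expr2 -[s * s * B]mulrA hs; ring.
move=> h; have := mulr_ge0 h (ltW Bpos).
have -> : (A + s * C) * B = A * B - C ^+ 2.
  rewrite mulrDl mulrAC hs; ring.
lra.
Qed.

Lemma cs_form {R : realType} {n} (G : 'M[R]_n) (a b : 'cV[R]_n) :
  G^T = G -> (forall v, 0 <= dot v (G *m v)) ->
  dot a (G *m b) ^+ 2 <= dot a (G *m a) * dot b (G *m b).
Proof.
move=> GT psd.
have sym : dot b (G *m a) = dot a (G *m b).
  by rewrite dot_mulmx GT dotC.
apply: quad_disc; first exact: psd.
move=> s; have := psd (a + s *: b).
rewrite mulmxDr -scalemxAr dotDl dotZl !dotDr !dotZr sym.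
have -> : dot a (G *m a) + s * dot a (G *m b) +
  s * (dot a (G *m b) + s * dot b (G *m b)) =
  dot a (G *m a) + 2 * s * dot a (G *m b) + s ^+ 2 * dot b (G *m b) by ring.
by [].
Qed.

Lemma cs_dot {R : realType} {n} (a b : 'cV[R]_n) :
  dot a b ^+ 2 <= dot a a * dot b b.
Proof.
have := @cs_form R n 1%:M a b (trmx1 _ _) (fun v => ltac:(rewrite mul1mx; exact: dot_ge0)).
by rewrite !mul1mx.
Qed.


Lemma mul_cV1 {R : realType} {n} (y : 'cV[R]_n) (c : 'M[R]_1) : y *m c = c 0 0 *: y.
Proof.
apply/matrixP => i j; rewrite (ord1 j) !mxE big_ord1 mulrC.
by rewrite [ord0]ord1.
Qed.

Lemma tr_mul_dot {R : realType} {n} (a x : 'cV[R]_n) : (a^T *m x) 0 0 = dot a x.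
Proof. by rewrite mxE; apply: eq_bigr => i _; rewrite mxE. Qed.

Lemma projB_mul {R : realType} {n} (U : 'M[R]_n) M (x : 'cV[R]_n) :
  projB U M *m x = \sum_(k < n | (k < M)%N) dot (col k U) x *: col k U.
Proof.
rewrite /projB mulmx_suml; apply: eq_bigr => k _.
by rewrite -mulmxA mul_cV1 tr_mul_dot.
Qed.

Lemma projB_tr {R : realType} {n} (U : 'M[R]_n) M : (projB U M)^T = projB U M.
Proof.
rewrite /projB raddf_sum; apply: eq_bigr => k _.
by rewrite /= trmx_mul trmxK.
Qed.

Lemma orthU {R : realType} {n} (U : 'M[R]_n) k l :
  U^T *m U = 1%:M -> dot (col k U) (col l U) = (k == l)%:R.
Proof.
move=> hU; have := congr1 (fun A : 'M[R]_n => A k l) hU; rewrite /= !mxE => <-.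
by apply: eq_bigr => i _; rewrite !mxE.
Qed.

Lemma projB_col {R : realType} {n} (U : 'M[R]_n) M l :
  U^T *m U = 1%:M -> projB U M *m col l U = if (l < M)%N then col l U else 0.
Proof.
move=> hU; rewrite projB_mul.
under eq_bigr do rewrite orthU //.
case: ifP => lM.
  rewrite (bigD1 l) //= eqxx scale1r big1 ?addr0 // => k /andP[_ kl].
  by rewrite (negbTE kl) scale0r.
rewrite big1 // => k kM; have -> : (k == l) = false.
  by apply/negP => /eqP kl; rewrite -kl kM in lM.
by rewrite scale0r.
Qed.

Lemma projB_inBM {R : realType} {n} (U : 'M[R]_n) M (x : 'cV[R]_n) :
  U^T *m U = 1%:M -> inBM U M x -> projB U M *m x = x.
Proof.
move=> hU [c ->]; rewrite mulmx_sumr; apply: eq_bigr => k kM.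
by rewrite -scalemxAr projB_col // kM.
Qed.

Lemma inBM_projB {R : realType} {n} (U : 'M[R]_n) M (x : 'cV[R]_n) : inBM U M (projB U M *m x).
Proof. by exists (fun k => dot (col k U) x); rewrite projB_mul. Qed.

Lemma projB_idem {R : realType} {n} (U : 'M[R]_n) M (x : 'cV[R]_n) :
  U^T *m U = 1%:M -> projB U M *m (projB U M *m x) = projB U M *m x.
Proof. by move=> hU; apply: projB_inBM => //; apply: inBM_projB. Qed.

Lemma inBM0 {R : realType} {n} (U : 'M[R]_n) M : inBM U M 0.
Proof. by exists (fun _ => 0); rewrite big1 // => k _; rewrite scale0r. Qed.

Lemma projB_contr {R : realType} {n} (U : 'M[R]_n) M (y : 'cV[R]_n) :
  U^T *m U = 1%:M ->
  dot y y = dot (projB U M *m y) (projB U M *m y) +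
            dot (y - projB U M *m y) (y - projB U M *m y).
Proof.
move=> hU; set P := projB U M.
set z := y - P *m y.
have h0 : dot (P *m y) z = 0.
  by rewrite dotC dot_mulmx projB_tr mulmxBr projB_idem // subrr dot0l.
have hy : y = P *m y + z by rewrite /z addrC subrK.
clearbody z; rewrite {1 2}hy dotDl !dotDr h0 (dotC z) h0; ring.
Qed.

Lemma projB_le {R : realType} {n} (U : 'M[R]_n) M (y : 'cV[R]_n) :
  U^T *m U = 1%:M ->
  dot (projB U M *m y) (projB U M *m y) <= dot y y.
Proof.
move=> hU; rewrite (projB_contr U M y hU) lerDl; exact: dot_ge0.
Qed.

Lemma projS_mul {R : realType} {n} (W : {set 'I_n}) (x : 'cV[R]_n) i :
  (projS W *m x) i 0 = if i \in W then x i 0 else 0.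
Proof.
rewrite mxE (bigD1 i) //= big1 => [|j ji]; last first.
  by rewrite mxE (eq_sym i j) (negbTE ji) mul0r.
by rewrite mxE eqxx /=; case: (i \in W); rewrite ?mul1r ?mul0r addr0.
Qed.

Lemma projS_tr {R : realType} {n} (W : {set 'I_n}) : (projS W)^T = projS W :> 'M[R]_n.
Proof.
apply/matrixP => i j; rewrite !mxE eq_sym.
by case: eqP => //= ->.
Qed.

Lemma projS_dot {R : realType} {n} (W : {set 'I_n}) (y : 'cV[R]_n) :
  dot y (projS W *m y) = dot (projS W *m y) (projS W *m y).
Proof.
apply: eq_bigr => i _; rewrite !projS_mul; case: (i \in W) => //.
by rewrite !mulr0.
Qed.

Lemma projS_split {R : realType} {n} (W : {set 'I_n}) (y : 'cV[R]_n) :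
  dot y y = dot (projS W *m y) (projS W *m y) +
            dot (y - projS W *m y) (y - projS W *m y).
Proof.
rewrite /dot -big_split; apply: eq_bigr => i _ /=.
have e (a b : 'cV[R]_n) : (a - b) i 0 = a i 0 - b i 0 by rewrite !mxE.
rewrite !e !projS_mul; case: (i \in W) => /=; ring.
Qed.

Lemma projE_dot {R : realType} {n} (W : {set 'I_n}) (y : 'cV[R]_n) :
  dot y ((1%:M - projS W) *m y) = dot y y - dot (projS W *m y) (projS W *m y).
Proof. by rewrite mulmxBl mul1mx dotBr projS_dot. Qed.


Lemma sq_entry_le {R : realType} {n} (x : 'cV[R]_n) i : x i 0 * x i 0 <= dot x x.
Proof.
rewrite /dot (bigD1 i) //= lerDl; apply: sumr_ge0 => j _; rewrite -expr2 sqr_ge0 //.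
Qed.

Lemma form_bound {R : realType} {n} (H : 'M[R]_n) (x : 'cV[R]_n) :
  dot x (H *m x) <= (\sum_i \sum_j `|H i j|) * dot x x.
Proof.
rewrite /dot big_distrl /=; apply: ler_sum => i _.
rewrite mxE big_distrr big_distrl /=; apply: ler_sum => j _.
have h1 := sq_entry_le x i; have h2 := sq_entry_le x j.
have h3 : x i 0 * (H i j * x j 0) <= `|H i j| * `|x i 0 * x j 0|.
  by apply: le_trans (ler_norm _) _; rewrite !normrM mulrCA.
apply: (le_trans h3); apply: ler_wpM2l => //.
have : `|x i 0 * x j 0| * 2 <= x i 0 * x i 0 + x j 0 * x j 0.
  have e1 := sqr_ge0 (x i 0 - x j 0); have e2 := sqr_ge0 (x i 0 + x j 0).
  have [y0|y0] := leP 0 (x i 0 * x j 0).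
    rewrite ger0_norm //; move: e1; rewrite sqrrB !expr2; lra.
  rewrite ltr0_norm //; move: e2; rewrite sqrrD !expr2; lra.
rewrite -/(dot x x); move: h1 h2; set D := dot x x; set a := x i 0 * x i 0; set b := x j 0 * x j 0.
set c := `|_|; lra.
Qed.


Lemma norming_delta {R : realType} {n} (U : 'M[R]_n) M (W : {set 'I_n}) :
  U^T *m U = 1%:M -> norming U M W ->
  exists d : R, [/\ 0 < d, d <= 1 &
    forall x, inBM U M x -> d * dot x x <= dot (projS W *m x) (projS W *m x)].
Proof.
move=> hU hN.
set P := projB U M; set S := projS W : 'M[R]_n.
set G := P *m S *m P + (1%:M - P).
have hGT : G^T = G.
  rewrite /G raddfD raddfB /= !trmx_mul trmx1 projB_tr projS_tr mulmxA.
  by [].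
have Gv v : G *m v = P *m (S *m (P *m v)) + (v - P *m v).
  by rewrite /G mulmxDl mulmxBl mul1mx !mulmxA.
have hPP v : dot v (P *m v) = dot (P *m v) (P *m v).
  by rewrite -{1}projB_idem // dot_mulmx projB_tr.
have form v : dot v (G *m v) =
    dot (S *m (P *m v)) (S *m (P *m v)) + (dot v v - dot (P *m v) (P *m v)).
  by rewrite Gv dotDr dotBr dot_mulmx projB_tr projS_dot hPP.
have psd v : 0 <= dot v (G *m v).
  rewrite form addr_ge0 ?dot_ge0 // subr_ge0; exact: projB_le.
have Gu : G \in unitmx.
  rewrite unitmxE unitfE; apply/negP => /det0P [v vn0 hv].
  set x := v^T.
  have Gx : G *m x = 0 by rewrite -hGT -trmx_mul hv trmx0.
  have := form x; rewrite Gx dot0r => /esym /eqP.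
  rewrite paddr_eq0 ?dot_ge0 ?subr_ge0 ?projB_le // => /andP [/eqP h1 /eqP h2].
  have hSP := dot_eq0 _ h1.
  have hxP : x = P *m x.
    have := projB_contr U M x hU; rewrite -/P => e.
    have : dot (x - P *m x) (x - P *m x) = 0.
      by move: h2; rewrite e addrC addKr.
    by move/dot_eq0/eqP; rewrite subr_eq0 => /eqP.
  have Px0 : P *m x = 0.
    apply: hN. all: try exact: inBM_projB. all: try exact: inBM0. Show.
    rewrite -!mulmxA; change (S *m (P *m (P *m x)) = S *m (P *m 0)).
    by rewrite /P projB_idem // !mulmx0; exact: hSP.
  move: vn0; rewrite -[v]trmxK -/x hxP Px0 trmx0 eqxx //.
set H := invmx G.
have HT : H^T = H by rewrite /H trmx_inv hGT.
set K := 1 + \sum_i \sum_j `|H i j|.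
have K1 : 1 <= K.
  by rewrite /K lerDl; apply: sumr_ge0 => i _; apply: sumr_ge0 => j _.
have K0 : 0 < K by apply: lt_le_trans K1.
exists K^-1; split.
- by rewrite invr_gt0.
- by rewrite invr_le1 // unitfE gt_eqF.
move=> x xB.
have e1 : dot (H *m x) (G *m x) = dot x x.
  by rewrite dot_mulmx hGT mulmxA mulmxV // mul1mx.
have e2 : dot (H *m x) (G *m (H *m x)) = dot x (H *m x).
  by rewrite mulmxA mulmxV // mul1mx dotC.
have cs := cs_form G (H *m x) x hGT psd.
rewrite e1 e2 in cs.
have hb : dot x (H *m x) <= K * dot x x.
  apply: le_trans (form_bound H x) _; apply: ler_wpM2r; first exact: dot_ge0.
  by rewrite /K lerDr.
have hGx : dot x (G *m x) = dot (S *m x) (S *m x).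
  by rewrite form projB_inBM // subrr addr0.
rewrite hGx in cs.
have q0 := dot_ge0 x; have s0 := dot_ge0 (S *m x).
rewrite mulrC ler_pdivrMr //.
have [qz|qp] := eqVneq (dot x x) 0.
  by rewrite qz mulr_ge0 // ltW.
have qpos : 0 < dot x x by rewrite lt0r qp.
have h4 := ler_wpM2r s0 hb.
have : dot x x * dot x x <= dot x x * (dot (S *m x) (S *m x) * K).
  have E : K * dot x x * dot (S *m x) (S *m x) =
    dot x x * (dot (S *m x) (S *m x) * K) by ring.
  rewrite -E -expr2; exact: le_trans cs h4.
by rewrite ler_pM2l.
Qed.


Lemma vnormE {R : realType} {n} (x : 'cV[R]_n) : vnorm x = Num.sqrt (dot x x).
Proof. by rewrite /vnorm /dot; under eq_bigr do rewrite expr2. Qed.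

Lemma vnorm_ge0 {R : realType} {n} (x : 'cV[R]_n) : 0 <= vnorm x.
Proof. by rewrite vnormE sqrtr_ge0. Qed.

Lemma vnorm0 {R : realType} {n} : vnorm (0 : 'cV[R]_n) = 0.
Proof. by rewrite vnormE dot0l sqrtr0. Qed.

Lemma vnormZ {R : realType} {n} (a : R) (x : 'cV[R]_n) : vnorm (a *: x) = `|a| * vnorm x.
Proof.
rewrite !vnormE dotZl dotZr mulrA -expr2 sqrtrM ?sqr_ge0 //.
by rewrite sqrtr_sqr.
Qed.

Lemma vnorm_le {R : realType} {n} (x y : 'cV[R]_n) :
  dot x x <= dot y y -> vnorm x <= vnorm y.
Proof. by rewrite !vnormE => h; apply: ler_wsqrtr. Qed.

Lemma vnorm_le1 {R : realType} {n} (x : 'cV[R]_n) : vnorm x <= 1 -> dot x x <= 1.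
Proof. by rewrite vnormE -{1}sqrtr1 ler_sqrt. Qed.

Lemma vnorm_eq0 {R : realType} {n} (x : 'cV[R]_n) : vnorm x = 0 -> x = 0.
Proof.
rewrite vnormE => /eqP; rewrite sqrtr_eq0 => h; apply: dot_eq0.
by apply/eqP; rewrite eq_le h dot_ge0.
Qed.

Lemma dot_le_vnorm {R : realType} {n} (a b : 'cV[R]_n) : dot a b <= vnorm a * vnorm b.
Proof.
apply: le_trans (ler_norm _) _.
rewrite -sqrtr_sqr !vnormE -sqrtrM ?dot_ge0 //; apply: ler_wsqrtr; exact: cs_dot.
Qed.


Theorem theorem6 (R : realType) (n : nat) (A : 'M[R]_n) (U : 'M[R]_n)
  (lam : 'rV[R]_n) (M : nat) (W : {set 'I_n}) :
  A^T = A ->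
  (forall i j, 0 <= A i j) ->
  (forall i, 0 < degree A i) ->
  U^T *m U = 1%:M ->
  normLap A = U *m diag_mx lam *m U^T ->
  (M <= n)%N ->
  (norming U M W <->
     opnorm (projB U M *m (1%:M - projS W) *m projB U M) < 1)
  /\ (norming U M W ->
     norming_const U M W <=
       1 / (1 - opnorm (projB U M *m (1%:M - projS W) *m projB U M))).
Proof.
move=> _ _ _ hU _ _.
set P := projB U M; set S := projS W : 'M[R]_n.
set T := P *m (1%:M - S) *m P.
have hTx (x : 'cV[R]_n) : T *m x = P *m ((1%:M - S) *m (P *m x)) by rewrite !mulmxA.
have hE (y : 'cV[R]_n) : (1%:M - S) *m y = y - S *m y by rewrite mulmxBl mul1mx.
have qT (x : 'cV[R]_n) : dot (T *m x) (T *m x) <=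
    dot (P *m x) (P *m x) - dot (S *m (P *m x)) (S *m (P *m x)).
  rewrite hTx; apply: le_trans (projB_le U M _ hU) _.
  rewrite hE (projS_split W (P *m x)); lra.
have vTx (x : 'cV[R]_n) : vnorm (T *m x) <= vnorm x.
  apply: vnorm_le; apply: le_trans (qT x) _.
  have := projB_le U M x hU; have := dot_ge0 (S *m (P *m x)); rewrite -/P; lra.
set E := [set vnorm (T *m x) | x in [set x : 'cV[R]_n | vnorm x <= 1]]%classic.
have tE : opnorm T = sup E by [].
have hub : has_ubound E.
  by exists 1; move=> r [x hx <-]; apply: le_trans (vTx x) hx.
have hne : (E !=set0)%classic.
  by exists (vnorm (T *m 0)), 0 => //=; rewrite vnorm0 ler01.
set t := opnorm T.
have t_ub (x : 'cV[R]_n) : vnorm x <= 1 -> vnorm (T *m x) <= t.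
  by move=> hx; rewrite /t tE; apply: ub_le_sup hub _ _; exists x.
have t0 : 0 <= t.
  by have := t_ub 0; rewrite mulmx0 vnorm0 ler01 => /(_ isT).
have tx (x : 'cV[R]_n) : vnorm (T *m x) <= t * vnorm x.
  have [->|xn0] := eqVneq x 0; first by rewrite mulmx0 vnorm0 mulr0.
  have c0 : 0 < vnorm x.
    rewrite lt_neqAle vnorm_ge0 andbT eq_sym; apply/negP => /eqP /vnorm_eq0 h.
    by rewrite h eqxx in xn0.
  have := t_ub ((vnorm x)^-1 *: x).
  rewrite vnormZ -scalemxAr vnormZ ger0_norm ?invr_ge0 ?vnorm_ge0 //.
  rewrite mulVf ?gt_eqF // lexx => /(_ isT).
  by rewrite mulrC ler_pdivrMr.
have hB (x : 'cV[R]_n) : inBM U M x -> P *m x = x by move=> xB; apply: projB_inBM.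
have const : t < 1 -> norming_const U M W <= 1 / (1 - t).
  move=> t1; apply: ge_sup.
    by exists (vnorm (0 : 'cV[R]_n)), 0 => //=; split; [exact: inBM0 | rewrite !mulmx0 vnorm0 ler01].
  move=> r [x [xB hx] <-].
  have e1 : dot x (T *m x) = dot x x - dot (S *m x) (S *m x).
    by rewrite hTx dot_mulmx projB_tr hB // projE_dot.
  have e2 : dot x (T *m x) <= t * dot x x.
    apply: le_trans (dot_le_vnorm _ _) _.
    apply: le_trans (ler_wpM2l (vnorm_ge0 x) (tx x)) _.
    by rewrite vnormE mulrCA -expr2 sqr_sqrtr ?dot_ge0.
  have hS : dot (S *m x) (S *m x) <= 1.
    by apply: vnorm_le1; move: hx; rewrite -mulmxA hB.
  have q1 : dot x x <= 1 / (1 - t).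
    rewrite ler_pdivlMr ?subr_gt0 //; move: e1 e2 hS.
    set q := dot x x; set s := dot _ _; move=> e1 e2 hS; nra.
  set a := 1 / (1 - t).
  have a1 : 1 <= a by rewrite /a ler_pdivlMr ?subr_gt0 // mul1r; lra.
  have sa : Num.sqrt a <= a.
    rewrite -{2}(ger0_norm (le_trans ler01 a1)) -sqrtr_sqr ler_sqrt ?sqr_ge0 //.
    by rewrite expr2 ler_peMr // (le_trans ler01 a1).
  by rewrite vnormE; apply: le_trans (ler_wsqrtr q1) sa.
have dir1 : norming U M W -> t < 1.
  move=> hN; have [d [d0 d1 hd]] := @norming_delta R n U M W hU hN.
  have hs : Num.sqrt (1 - d) < 1.
    by rewrite -{2}sqrtr1 ltr_sqrt; lra.
  apply: le_lt_trans hs; rewrite /t tE; apply: ge_sup => // r [x hx <-].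
  rewrite vnormE; apply: ler_wsqrtr; apply: le_trans (qT x) _.
  have := hd _ (inBM_projB U M x); have := projB_le U M x hU.
  have := vnorm_le1 _ hx; have := dot_ge0 (P *m x); rewrite -/P -/S.
  set a := dot x x; set b := dot (P *m x) _; set c := dot _ _; nra.
have dir2 : t < 1 -> norming U M W.
  move=> t1 x y xB yB hxy.
  set z := x - y.
  have zB : P *m z = z by rewrite /z mulmxBr !hB.
  have Sz : S *m z = 0.
    by rewrite -zB mulmxA /z mulmxBr hxy subrr.
  have Tz : T *m z = z by rewrite hTx zB hE Sz subr0 zB.
  have := tx z; rewrite Tz => h.
  have : vnorm z = 0.
    apply/eqP; rewrite eq_le vnorm_ge0 andbT.
    have := vnorm_ge0 z; nra.
  by move/vnorm_eq0/eqP; rewrite subr_eq0 => /eqP.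
split; first by split.
by move=> hN; apply: const; apply: dir1.
Qed.
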